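(* Let $\mathscr A$ be an additive category and $n\ge 2$. Let $X_0\xrightarrow{f_0}X_1\xrightarrow{f_1}X_2\xrightarrow{f_2}\cdots\xrightarrow{f_{n-1}}X_n$ and $X_0\xrightarrow{f_0}X_1\xrightarrow{g_1}X'_2\xrightarrow{g_2}\cdots\xrightarrow{g_{n-1}}X'_n$ be sequences of morphisms, and put $g_0:=f_0$. Let $\varphi_k\colon X_k\to X'_k$ for $2\le k\le n$ be morphisms with $\varphi_2f_1=g_1$ and $\varphi_{k+1}f_k=g_k\varphi_k$ for $2\le k\le n-1$; that is, together with $\varphi_0=\mathrm{id}_{X_0}$ and $\varphi_1=\mathrm{id}_{X_1}$ they form a commutative ladder. Assume: (i) $f_i$ is a weak cokernel of $f_{i-1}$ for $1\le i\le n-1$; (ii) $g_i$ is a weak cokernel of $g_{i-1}$ for $1\le i\le n-1$; (iii) $f_2,\dots,f_{n-1}$ and $g_2,\dots,g_{n-1}$ lie in the radical of $\mathscr A$. Then $\varphi_2,\dots,\varphi_{n-1}$ are isomorphisms.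
   Context: Composition of $f\colon X\to Y$ and $g\colon Y\to Z$ is written $gf$. A morphism $g$ is a weak cokernel of $f$ if $gf=0$ and every $h$ with $hf=0$ factors through $g$. The radical of an additive category is $\operatorname{rad}(X,Y)=\{f\colon X\to Y\mid \mathrm{id}_X-hf \text{ is invertible for all } h\colon Y\to X\}$. *)

(* Defs.v *)
From HB Require Import structures.
From mathcomp Require Import all_boot all_order all_algebra.
Set Implicit Arguments. Unset Strict Implicit. Unset Printing Implicit Defensive.
Import GRing.Theory.
Local Open Scope ring_scope.

Record AddCat := {
  Ob : Type;
  Mor : Ob -> Ob -> zmodType;
  (* cmp g f = g ∘ f  (the paper writes gf) *)
  cmp : forall X Y Z : Ob, Mor Y Z -> Mor X Y -> Mor X Z;
  idm : forall X : Ob, Mor X X;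
  compA : forall (W X Y Z : Ob) (h : Mor Y Z) (g : Mor X Y) (f : Mor W X),
      cmp h (cmp g f) = cmp (cmp h g) f;
  comp1m : forall (X Y : Ob) (f : Mor X Y), cmp (idm Y) f = f;
  compm1 : forall (X Y : Ob) (f : Mor X Y), cmp f (idm X) = f;
  compDl : forall (X Y Z : Ob) (g1 g2 : Mor Y Z) (f : Mor X Y),
      cmp (g1 + g2) f = cmp g1 f + cmp g2 f;
  compDr : forall (X Y Z : Ob) (g : Mor Y Z) (f1 f2 : Mor X Y),
      cmp g (f1 + f2) = cmp g f1 + cmp g f2;
  zero_object : exists Z : Ob,
      forall X : Ob, (forall u : Mor X Z, u = 0) /\ (forall v : Mor Z X, v = 0);
  biproducts : forall X Y : Ob, exists (P : Ob)
      (i1 : Mor X P) (i2 : Mor Y P) (p1 : Mor P X) (p2 : Mor P Y),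
      [/\ cmp p1 i1 = idm X, cmp p2 i2 = idm Y,
          cmp p1 i2 = 0, cmp p2 i1 = 0 &
          cmp i1 p1 + cmp i2 p2 = idm P]
}.

Arguments Mor : clear implicits.
Arguments Ob : clear implicits.
Arguments cmp {a X Y Z}.
Arguments idm {a}.

Section Notions.
Variable C : AddCat.

Definition is_iso (X Y : Ob C) (f : Mor C X Y) : Prop :=
  exists g : Mor C Y X, cmp g f = idm X /\ cmp f g = idm Y.

Definition weak_cokernel (X Y Z : Ob C) (g : Mor C Y Z) (f : Mor C X Y) : Prop :=
  cmp g f = 0 /\
  forall (W : Ob C) (h : Mor C Y W), cmp h f = 0 ->
    exists u : Mor C Z W, h = cmp u g.

Definition in_radical (X Y : Ob C) (f : Mor C X Y) : Prop :=
  forall h : Mor C Y X, is_iso (idm X - cmp h f).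

(* The second sequence X_0, X_1, X'_2, X'_3, ... : it shares X_0 and X_1
   with the first one (definitionally); X' is only used for indices >= 2. *)
Definition shared_seq (X X' : nat -> Ob C) (k : nat) : Ob C :=
  match k with 0 => X 0%N | 1 => X 1%N | _ => X' k end.
End Notions.

Arguments is_iso {C X Y}.
Arguments weak_cokernel {C X Y Z}.
Arguments in_radical {C X Y}.

(* Main.v *)
Require Import Defs.
From mathcomp Require Import all_boot all_order all_algebra.
Import GRing.Theory.
Local Open Scope ring_scope.

Section Helpers.
Variable C : AddCat.

Lemma cmp0l (X Y Z : Ob C) (f : Mor C X Y) : cmp (0 : Mor C Y Z) f = 0.
Proof.
have := compDl (0 : Mor C Y Z) 0 f; rewrite addr0 => H.
apply: (addrI (cmp (0 : Mor C Y Z) f)); by rewrite addr0 -H.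
Qed.

Lemma cmpNl (X Y Z : Ob C) (g : Mor C Y Z) (f : Mor C X Y) : cmp (- g) f = - cmp g f.
Proof.
have := compDl g (-g) f; rewrite subrr cmp0l => H.
apply: (addrI (cmp g f)); by rewrite -H subrr.
Qed.

Lemma cmpBl (X Y Z : Ob C) (g1 g2 : Mor C Y Z) (f : Mor C X Y) :
  cmp (g1 - g2) f = cmp g1 f - cmp g2 f.
Proof. by rewrite compDl cmpNl. Qed.

Lemma cmp0r (X Y Z : Ob C) (g : Mor C Y Z) : cmp g (0 : Mor C X Y) = 0.
Proof.
have := compDr g (0 : Mor C X Y) 0; rewrite addr0 => H.
apply: (addrI (cmp g (0 : Mor C X Y))); by rewrite addr0 -H.
Qed.

Lemma iso_lr (A B : Ob C) (p : Mor C A B) (a b : Mor C B A) :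
  cmp a p = idm A -> cmp p b = idm B -> is_iso p.
Proof.
move=> H1 H2; exists a; split => //.
have -> : a = b by rewrite -[a]compm1 -H2 Defs.compA H1 comp1m.
exact: H2.
Qed.

Lemma iso_both (A B : Ob C) (p : Mor C A B) (q : Mor C B A) :
  is_iso (cmp q p) -> is_iso (cmp p q) -> is_iso p.
Proof.
move=> [s [Hs1 _]] [t [_ Ht2]].
apply: (@iso_lr _ _ p (cmp s q) (cmp q t)); first by rewrite -Defs.compA.
by rewrite Defs.compA.
Qed.

Lemma rad_iso (P A A2 : Ob C) (a : Mor C P A) (a' : Mor C A A2) (e : Mor C A A) :
  in_radical a' -> weak_cokernel a' a -> cmp e a = a -> is_iso e.
Proof.
move=> Hrad [_ Hw] He.
have H0 : cmp (idm A - e) a = 0 by rewrite cmpBl comp1m He subrr.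
have [u Hu] := Hw _ (idm A - e) H0.
have := Hrad u; rewrite -Hu.
have -> : idm A - (idm A - e) = e by rewrite opprB addrC subrK.
done.
Qed.

End Helpers.
Arguments cmp0l {C X Y Z}. Arguments iso_lr {C A B p a b}. Arguments iso_both {C A B p q}. Arguments rad_iso {C P A A2 a a' e}.

Theorem mainTheorem2 (C : AddCat) (n : nat) (hn : (2 <= n)%N)
  (X X' : nat -> Ob C)
  (f : forall k : nat, Mor C (X k) (X k.+1))
  (g : forall k : nat, Mor C (shared_seq X X' k) (shared_seq X X' k.+1))
  (phi : forall k : nat, Mor C (X k) (shared_seq X X' k))
  (hg0 : g 0%N = f 0%N)
  (hphi2 : cmp (phi 2%N) (f 1%N) = g 1%N)
  (hladder : forall k : nat, (2 <= k)%N -> (k <= n.-1)%N ->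
      cmp (phi k.+1) (f k) = cmp (g k) (phi k))
  (hf : forall i : nat, (i.+1 <= n.-1)%N -> weak_cokernel (f i.+1) (f i))
  (hg : forall i : nat, (i.+1 <= n.-1)%N -> weak_cokernel (g i.+1) (g i))
  (hradf : forall i : nat, (2 <= i)%N -> (i <= n.-1)%N -> in_radical (f i))
  (hradg : forall i : nat, (2 <= i)%N -> (i <= n.-1)%N -> in_radical (g i)) :
  forall k : nat, (2 <= k)%N -> (k <= n.-1)%N -> is_iso (phi k).
Proof.
suff Q : forall m, (m.+2 <= n.-1)%N ->
  exists (psi : Mor C (shared_seq X X' m.+2) (X m.+2))
         (chi : Mor C (shared_seq X X' m.+1) (X m.+1)),
    [/\ cmp psi (phi m.+2) = idm _, cmp (phi m.+2) psi = idm _ &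
        cmp psi (g m.+1) = cmp (f m.+1) chi].
  move=> [|[|m]] // _ Hm.
  have [psi [chi [H1 H2 _]]] := Q m Hm.
  exact: (iso_lr H1 H2).
elim=> [|m IH] Hm.
-
  have [_ Hw] := hg 0%N (ltnW Hm).
  have Hf10 : cmp (f 1%N) (f 0%N) = 0 by case: (hf 0%N (ltnW Hm)).
  have H0 : cmp (f 1%N) (g 0%N) = 0 by rewrite hg0.
  have [psi Hpsi] := Hw _ (f 1%N) H0.
  have E1 : cmp (cmp psi (phi 2%N)) (f 1%N) = f 1%N by rewrite -Defs.compA hphi2 -Hpsi.
  have E2 : cmp (cmp (phi 2%N) psi) (g 1%N) = g 1%N by rewrite -Defs.compA -Hpsi.
  have I1 := rad_iso (hradf 2%N isT Hm) (hf 1%N Hm) E1.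
  have I2 := rad_iso (hradg 2%N isT Hm) (hg 1%N Hm) E2.
  have [q [Hq1 Hq2]] := iso_both I1 I2.
  exists q, (idm (X 1%N)); split => //.
  by rewrite compm1 -hphi2 Defs.compA Hq1 comp1m.
- have Hm' : (m.+2 <= n.-1)%N by apply: ltnW.
  have [psi [chi [H1 H2 H3]]] := IH Hm'.
  have [_ Hw] := hg m.+1 Hm'.
  have Hff : cmp (f m.+2) (f m.+1) = 0 by case: (hf m.+1 Hm').
  have H0 : cmp (cmp (f m.+2) psi) (g m.+1) = 0.
    by rewrite -Defs.compA H3 Defs.compA Hff cmp0l.
  have [psi' Hpsi'] := Hw _ (cmp (f m.+2) psi) H0.
  have Hlad := hladder m.+2 isT Hm'.
  have E1 : cmp (cmp psi' (phi m.+3)) (f m.+2) = f m.+2.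
    by rewrite -Defs.compA Hlad Defs.compA -Hpsi' -Defs.compA H1 compm1.
  have E2 : cmp (cmp (phi m.+3) psi') (g m.+2) = g m.+2.
    by rewrite -Defs.compA -Hpsi' Defs.compA Hlad -Defs.compA H2 compm1.
  have I1 := rad_iso (hradf m.+3 isT Hm) (hf m.+2 Hm) E1.
  have I2 := rad_iso (hradg m.+3 isT Hm) (hg m.+2 Hm) E2.
  have [q [Hq1 Hq2]] := iso_both I1 I2.
  exists q, psi; split => //.
  by rewrite -[g m.+2]compm1 -H2 (Defs.compA (g m.+2)) -Hlad -Defs.compA Defs.compA Hq1 comp1m.
Qed.
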